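(* Let $d,m\in\mathbb{N}$ and let $\overline{\omega}_N\subset S^d$ be a strongly $m$-sharp configuration. Then $\mathbf{x}\cdot\mathbf{y}\ne-1$ for all $\mathbf{x},\mathbf{y}\in\overline{\omega}_N$; i.e., $\overline{\omega}_N$ contains no pair of antipodal points.
   Context: $S^d$ is the unit sphere in $\mathbb{R}^{d+1}$ and $\sigma_d$ its normalized surface measure. A spherical $n$-design is a configuration with $\frac1N\sum_i p(\mathbf{x}_i)=\int_{S^d}p\,d\sigma_d$ for all polynomials $p$ on $\mathbb{R}^{d+1}$ of degree $\le n$. A configuration of $N$ distinct points is $m$-sharp if it is a spherical $(2m-1)$-design and exactly $m$ distinct dot products occur between distinct points; strongly $m$-sharp if moreover it is a spherical $2m$-design. *)

(* Defs.v *)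
From HB Require Import structures.
From mathcomp Require Import all_boot all_order all_algebra.
From mathcomp Require Import reals.
From mathcomp Require Import mpoly.
Unset Printing Implicit Defensive.
Import Order.TTheory GRing.Theory Num.Theory.
Local Open Scope ring_scope.

(* Points of R^(d+1) are functions 'I_(d+1) -> R; a configuration of N points
   is a family x : 'I_N -> ('I_(d+1) -> R). *)

Definition dotp (R : realType) (n : nat) (u v : 'I_n -> R) : R :=
  \sum_(k < n) u k * v k.

Definition on_sphere (R : realType) (d : nat) (u : 'I_d.+1 -> R) : Prop :=
  dotp R d.+1 u u = 1.

Definition odd_dfact (b : nat) : nat := \prod_(i < b) (2 * i + 1)%N.

(* Moment of the monomial x^a with respect to the normalized surface
   measure sigma_d on S^d (subset of R^(d+1)):
     int_{S^d} x^a dsigma_d = 0 if some a_i is odd, and otherwise, with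
     a_i = 2 b_i and |b| = sum b_i,
       prod_i (2 b_i - 1)!! / prod_{j < |b|} (d + 1 + 2 j). *)
Definition sphere_moment (R : realType) (d : nat) (a : 'X_{1..d.+1}) : R :=
  if [forall i, ~~ odd (a i)] then
    (\prod_(i < d.+1) (odd_dfact ((a i)./2))%:R) /
    (\prod_(j < (mdeg a)./2) (d.+1 + 2 * j)%:R)
  else 0.

(* integral of a polynomial over S^d against sigma_d (by linearity) *)
Definition sphere_int (R : realType) (d : nat) (p : {mpoly R[d.+1]}) : R :=
  \sum_(a <- msupp p) p@_a * sphere_moment R d a.

Definition spherical_design (R : realType) (d t N : nat)
    (x : 'I_N -> 'I_d.+1 -> R) : Prop :=
  forall p : {mpoly R[d.+1]}, (msize p <= t.+1)%N ->
    N%:R^-1 * \sum_(i < N) p.@[x i] = sphere_int R d p.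

Definition inner_products (R : realType) (d N : nat)
    (x : 'I_N -> 'I_d.+1 -> R) : seq R :=
  undup [seq dotp R d.+1 (x ij.1) (x ij.2) | ij <- enum [pred ij : 'I_N * 'I_N | ij.1 != ij.2]].

Definition configuration (R : realType) (d N : nat)
    (x : 'I_N -> 'I_d.+1 -> R) : Prop :=
  injective x /\ (forall i, on_sphere R d (x i)).

Definition m_sharp (R : realType) (d m N : nat) (x : 'I_N -> 'I_d.+1 -> R) : Prop :=
  [/\ configuration R d N x, spherical_design R d (2 * m).-1 N x
    & size (inner_products R d N x) = m].

Definition strongly_m_sharp (R : realType) (d m N : nat)
    (x : 'I_N -> 'I_d.+1 -> R) : Prop :=
  m_sharp R d m N x /\ spherical_design R d (2 * m) N x.

(* Main.v *)
Require Import Defs.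
From HB Require Import structures.
From mathcomp Require Import all_boot all_order all_algebra.
From mathcomp Require Import reals.
From mathcomp Require Import mpoly.
From mathcomp Require Import ring lra zify.
From Stdlib Require Import FunctionalExtensionality.
Import Order.TTheory GRing.Theory Num.Theory.
Local Open Scope ring_scope.
Section S.
Variable (R : realType) (d : nat).
Local Notation n := d.+1.
Local Notation L := (sphere_int R d).
Local Notation M := (sphere_moment R d).

Lemma L_seq (p : {mpoly R[n]}) (s : seq 'X_{1..n}) : uniq s -> {subset msupp p <= s} ->
  L p = \sum_(a <- s) p@_a * M a.
Proof.
move=> us sub.
rewrite /sphere_int [RHS](bigID (fun a => a \in msupp p)) /=.
rewrite [X in _ + X]big1 ?addr0; last first.
  by move=> a ha; rewrite (_ : p@_a = 0) ?mul0r //; apply/eqP; rewrite mcoeff_eq0.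
rewrite -[RHS]big_filter; apply: perm_big; apply: uniq_perm.

- exact: msupp_uniq.
- exact: filter_uniq.
by move=> a; rewrite mem_filter; case h: (a \in msupp p) => //=; rewrite sub.
Qed.

Lemma LD p q : L (p + q) = L p + L q.
Proof.
set s := undup (msupp p ++ msupp q).
have us : uniq s by apply: undup_uniq.
rewrite (L_seq (p+q) s us) ?(L_seq p s us) ?(L_seq q s us).
- by rewrite -big_split /=; apply: eq_bigr => a _; rewrite mcoeffD mulrDl.
- by move=> a h; rewrite mem_undup mem_cat h orbT.
- by move=> a h; rewrite mem_undup mem_cat h.
by move=> a /msuppD_le; rewrite mem_undup.
Qed.

Lemma LZ c p : L (c *: p) = c * L p.
Proof.
rewrite (L_seq (c *: p) _ (msupp_uniq p)); last exact: msuppZ_le.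
rewrite /sphere_int mulr_sumr; apply: eq_bigr => a _; by rewrite mcoeffZ mulrA.
Qed.

Lemma L0 : L 0 = 0.
Proof. by rewrite /sphere_int msupp0 big_nil. Qed.

Lemma L_sum (I : Type) (r : seq I) (F : I -> {mpoly R[n]}) :
  L (\sum_(i <- r) F i) = \sum_(i <- r) L (F i).
Proof.
elim: r => [|a r IH]; first by rewrite !big_nil L0.
by rewrite !big_cons LD IH.
Qed.

Lemma LX m : L 'X_[m] = M m.
Proof. by rewrite /sphere_int msuppX big_seq1 mcoeffX eqxx mul1r. Qed.

Lemma homog_msize {k} {p : {mpoly R[n]}} : p \is k.-homog -> (msize p <= k.+1)%N.
Proof.
move=> /dhomog_mf h; rewrite msizeE big_seq_cond; apply/bigmax_leqP_seq => m hm _.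
by rewrite h.
Qed.


Lemma odd_dfactS k : odd_dfact k.+1 = (odd_dfact k * (2 * k + 1))%N.
Proof. by rewrite /odd_dfact big_ord_recr. Qed.

Lemma Mcore b i : ((d.+1 + mdeg b)%:R : R) * M (b + U_(i) + U_(i))%MM
   = ((b i).+1)%:R * M b.
Proof.
rewrite /sphere_moment.
have hodd : forall j, odd ((b + U_(i) + U_(i))%MM j) = odd (b j).
  by move=> j; rewrite !mnmDE mnm1E; case: (i == j); rewrite ?addn0 //= !addn1 /= negbK.
rewrite (eq_forallb (fun j => congr1 negb (hodd j))).
case: ifP => ev; last by rewrite !mulr0.
have evi : forall j, ~~ odd (b j) by move=> j; exact: (forallP ev j).
have E1 : \prod_(j < n) ((odd_dfact (((b + U_(i) + U_(i))%MM j)./2))%:R : R)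
   = ((b i).+1)%:R * \prod_(j < n) (odd_dfact ((b j)./2))%:R.
  rewrite (bigD1 i) //= [in RHS](bigD1 i) //= mulrA; congr (_ * _).
    rewrite !mnmDE mnm1E eqxx !addn1 /= odd_dfactS natrM mulrC; congr (_ * _).
    by rewrite mul2n even_halfK ?evi // addn1.
  by apply: eq_bigr => j hj; rewrite !mnmDE mnm1E eq_sym (negbTE hj) !addn0.
have evd : ~~ odd (mdeg b).
  rewrite mdegE; elim/big_ind: _ => //.
  by move=> x y hx hy; rewrite oddD (negbTE hx) (negbTE hy).
have E2 : (mdeg (b + U_(i) + U_(i))%MM)./2 = ((mdeg b)./2).+1.
  by rewrite !mdegD mdeg1 !addn1.
rewrite E1 E2 [\prod_(j < (mdeg b)./2.+1) _]big_ord_recr /= mul2n even_halfK //.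
set P := \prod_(j < n) _.
set D := \prod_(j < _) _.
have hD : D != 0.
  rewrite /D; apply/prodf_neq0 => j _; by rewrite pnatr_eq0 addSn.
have hk : ((d.+1 + mdeg b)%:R : R) != 0 by rewrite pnatr_eq0 addSn.
field.
rewrite hD /=; apply: lt0r_neq0; have h1 := ler0n R d; have h2 := ler0n R (mdeg b); lra.
Qed.


Lemma Mshift a i : ((d + mdeg a)%:R : R) * M (a + U_(i))%MM
   = (a i)%:R * M (a - U_(i))%MM.
Proof.
case ha: (a i) => [|k].
  rewrite mul0r /sphere_moment; case: ifP; last by rewrite mulr0.
  by move=> /forallP /(_ i); rewrite mnmDE mnm1E eqxx ha.
set b := (a - U_(i))%MM.
have hab : a = (b + U_(i))%MM.
  apply/mnmP => j; rewrite mnmDE mnmBE mnm1E.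
  by case: eqP => [<-|_]; rewrite ?ha ?subn0 ?addn0 // subn1 addn1.
have hbi : b i = k by rewrite mnmBE mnm1E eqxx ha subn1.
rewrite {1 2}hab mdegD mdeg1 addnA addn1 Mcore hbi.
by [].
Qed.

Lemma mpolyXU_ (i : 'I_n) : ('X_i : {mpoly R[n]}) = 'X_[U_(i)].
Proof. by []. Qed.

Lemma L_deriv k (p : {mpoly R[n]}) (i : 'I_n) : p \is k.-homog ->
  ((d + k)%:R : R) * L ('X_i * p) = L (p^`M(i)).
Proof.
move=> /dhomog_mf hp.
have E1 : 'X_i * p = \sum_(a <- msupp p) (p@_a *: 'X_[(U_(i) + a)%MM]).
  rewrite {1}(mpolyE p) mulr_sumr; apply: eq_bigr => a _.
  by rewrite -scalerAr mpolyXD.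
have E2 : p^`M(i) = \sum_(a <- msupp p) (p@_a *: ((a i)%:R *: 'X_[(a - U_(i))%MM])).
  rewrite {1}(mpolyE p) raddf_sum; apply: eq_bigr => a _.
  by rewrite linearZ /= mderivZ mderivX !scalerA mulrC.
rewrite E1 E2 !L_sum mulr_sumr.
rewrite big_seq [RHS]big_seq; apply: eq_bigr => a ha.
rewrite !LZ !LX.
by rewrite mulrCA -(hp a ha) addmC Mshift mulrA.
Qed.


Variable y : 'I_n -> R.
Hypothesis hy : \sum_(r < n) y r * y r = 1.

Definition ell : {mpoly R[n]} := \sum_(r < n) y r *: 'X_r.

Lemma ell_homog k : ell ^+ k \is k.-homog.
Proof.
have h1 : ell \is 1.-homog.
  apply: rpred_sum => r _; apply: rpredZ.
  by apply/dhomogP => m; rewrite msuppX inE => /eqP ->; exact: mdeg1.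
by have := dhomogMn k h1; rewrite mul1n.
Qed.

Lemma deriv_ell i : ell^`M(i) = y i *: 1.
Proof.
rewrite raddf_sum (bigD1 i) //= big1 ?addr0.
  rewrite linearZ /= mderivX mnm1E eqxx scale1r.
  have -> : (U_(i) - U_(i))%MM = 0%MM by apply/mnmP => j; rewrite mnmBE mnm0E subnn.
  by rewrite mpolyX0.
move=> r hr; rewrite linearZ /= mderivX mnm1E (negbTE hr).
by rewrite scale0r scaler0.
Qed.

Lemma deriv_ellX k i : (ell ^+ k.+1)^`M(i) = ((k.+1)%:R * y i) *: ell ^+ k.
Proof.
elim: k => [|k IH].
  by rewrite expr1 expr0 deriv_ell mul1r.
rewrite exprS mderivM IH deriv_ell -scalerAl mul1r -scalerAr -exprS.
by rewrite -scalerDl [k.+2%:R]mulrS mulrDl mul1r.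
Qed.

Definition c k := L (ell ^+ k).

Lemma c0 : c 0 = 1.
Proof.
rewrite /c expr0 -mpolyX0 LX /sphere_moment.
case: ifP => [_|/forallP []]; last by move=> j; rewrite mnm0E.
rewrite mdeg0 big_ord0 invr1 mulr1 big1 // => j _.
by rewrite mnm0E /odd_dfact big_ord0.
Qed.

Lemma c1 : c 1 = 0.
Proof.
rewrite /c expr1 /ell L_sum big1 // => r _.
rewrite LZ LX /sphere_moment; case: ifP; last by rewrite mulr0.
by move=> /forallP /(_ r); rewrite mnm1E eqxx.
Qed.

Lemma crec k : ((d.+1 + k)%:R : R) * c k.+2 = (k.+1)%:R * c k.
Proof.
have -> : c k.+2 = \sum_(r < n) y r * L ('X_r * ell ^+ k.+1).
  rewrite /c exprS {1}/ell mulr_suml L_sum; apply: eq_bigr => r _.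
  by rewrite -scalerAl LZ.
rewrite mulr_sumr (eq_bigr (fun r => (k.+1)%:R * c k * (y r * y r))).
  by rewrite -mulr_sumr hy mulr1.
move=> r _; rewrite mulrCA (_ : (n + k = d + k.+1)%N) ?addSnnS // L_deriv ?ell_homog // deriv_ellX LZ.
rewrite /c; ring.
Qed.


Definition PP (g : {poly R}) : {mpoly R[n]} := horner_alg ell g.
Definition Lam g := L (PP g).

Lemma LamD g h : Lam (g + h) = Lam g + Lam h.
Proof. by rewrite /Lam /PP rmorphD LD. Qed.

Lemma LamZ a g : Lam (a *: g) = a * Lam g.
Proof. rewrite /Lam /PP linearZ /= mulr_algl; exact: LZ. Qed.

Lemma LamX k : Lam ('X^k) = c k.
Proof. by rewrite /Lam /PP rmorphXn /= horner_algX. Qed.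

Lemma LMn p m : L (p *+ m) = L p *+ m.
Proof. by rewrite -scaler_nat LZ mulr_natl. Qed.

Lemma LamN g : Lam (- g) = - Lam g.
Proof. by rewrite -scaleN1r LamZ mulN1r. Qed.

Lemma stein0 k : Lam ((1 - 'X^2) * ('X^k)^`() - d%:R *: ('X * 'X^k)) = 0.
Proof.
rewrite derivXn -exprS.
case: k => [|j] /=.
  by rewrite mulr0n mulr0 add0r LamN LamZ LamX c1 mulr0 oppr0.
have -> : ((1 - 'X^2) * ((('X^j : {poly R})) *+ j.+1) - d%:R *: ('X^(j.+2) : {poly R}) : {poly R})
   = (j.+1)%:R *: 'X^j - ((j.+1)%:R + d%:R) *: ('X^(j.+2) : {poly R}).
  by rewrite mulrBl mul1r mulrnAr -exprD (addnC 2 j) addn2 scalerDl -!scaler_nat opprD addrA.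
rewrite LamD LamN !LamZ !LamX.
have := crec j.
rewrite (_ : ((d.+1 + j)%:R : R) = (j.+1)%:R + d%:R); last by rewrite -natrD addnC addSnnS.
move=> ->; by rewrite subrr.
Qed.


Definition Tp (p : {poly R}) := (1 - 'X^2) * p^`() - d%:R *: ('X * p).

Lemma TpD p q : Tp (p + q) = Tp p + Tp q.
Proof.
rewrite /Tp derivD mulrDr mulrDr scalerDr.
by rewrite opprD !addrA; congr (_ + _); rewrite -!addrA; congr (_ + _); rewrite addrC.
Qed.

Lemma TpZ a p : Tp (a *: p) = a *: Tp p.
Proof.
rewrite /Tp derivZ scalerBr -scalerAr; congr (_ - _).
by rewrite -scalerAr !scalerA mulrC.
Qed.

Lemma Lam0 : Lam 0 = 0.
Proof. by rewrite /Lam /PP rmorph0 L0. Qed.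

Lemma stein g : Lam (Tp g) = 0.
Proof.
rewrite -[g]coefK poly_def.
elim/big_ind: _ => [|p q hp hq|i _].
- by rewrite /Tp deriv0 mulr0 mulr0 scaler0 subrr Lam0.
- by rewrite TpD LamD hp hq addr0.
by rewrite TpZ LamZ stein0 mulr0.
Qed.

Lemma PP_eval g v : (PP g).@[v] = g.[dotp R n y v].
Proof.
elim/poly_ind: g => [|g a IH].
  by rewrite /PP rmorph0 meval0 horner0.
rewrite /PP rmorphD rmorphM /= horner_algX horner_algC mevalD mevalM.
rewrite -/(PP g) IH hornerD hornerMX hornerC.
congr (_ * _ + _).
  rewrite /ell raddf_sum /dotp; apply: eq_bigr => r _.
  by have := mevalZ v (y r) ('X_r : {mpoly R[n]}); rewrite mevalXU.
by have := mevalZ v a 1; rewrite meval1 mulr1.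
Qed.


Lemma PP_msize g : (msize (PP g) <= size g)%N.
Proof.
rewrite -[g in PP g]coefK poly_def /PP rmorph_sum /=.
apply: leq_trans; first exact: mmeasure_sum.
apply/bigmax_leqP => i _.
rewrite linearZ /= mulr_algl rmorphXn /= horner_algX.
apply: (leq_trans (msizeZ_le _ _)).
exact: (leq_trans (homog_msize (ell_homog i)) (ltn_ord i)).
Qed.

End S.

Lemma unit_eq {R : realType} {d} {u v : 'I_d.+1 -> R} : on_sphere R d u -> on_sphere R d v ->
  dotp R d.+1 u v = 1 -> u = v.
Proof.
rewrite /on_sphere => hu hv huv.
have h : \sum_(r < d.+1) (u r - v r) ^+ 2 = 0.
  have -> : \sum_(r < d.+1) (u r - v r) ^+ 2
      = dotp R d.+1 u u - 2 * dotp R d.+1 u v + dotp R d.+1 v v.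
    rewrite /dotp mulr_sumr -sumrB -big_split /=; apply: eq_bigr => r _; ring.
  by rewrite hu hv huv; ring.
apply: functional_extensionality => r.
have := psumr_eq0P (P := predT) (F := fun r => (u r - v r)^+2) (fun r _ => sqr_ge0 _) h (i := r) isT.
by move=> /eqP; rewrite sqrf_eq0 subr_eq0 => /eqP.
Qed.

Theorem lemma3p4 (R : realType) (d m N : nat) (x : 'I_N -> 'I_d.+1 -> R) :
  (1 <= d)%N -> (1 <= m)%N ->
  strongly_m_sharp R d m N x ->
  forall i j : 'I_N, dotp R d.+1 (x i) (x j) <> -1.
Proof.
move=> hd hm [[[inj sph] _ hsz] hdes] i j hij.
have hii : dotp R d.+1 (x i) (x i) = 1 := sph i.
have [eij|nij] := eqVneq i j.
  rewrite -eij hii in hij; clear -hij; lra.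
set A := inner_products R d N x.
have memA : forall k l, k != l -> dotp R d.+1 (x k) (x l) \in A.
  move=> k l hkl; rewrite /A /inner_products mem_undup; apply/mapP; exists (k, l) => //.
  by rewrite mem_enum inE.
have hA1 : -1 \in A by rewrite -hij; exact: memA.
have uA : uniq A := undup_uniq _.
set B := [seq a <- A | a != -1].
have szB : size B = m.-1.
  rewrite size_filter.
  have h1 := count_predC (fun a => a != -1) A.
  have h2 : count (predC (fun a => a != -1)) A = 1%N.
    rewrite (eq_count (a2 := pred1 (-1))); first by rewrite count_uniq_mem // hA1.
    by move=> a /=; rewrite negbK.
  by rewrite -hsz -h1 h2 addn1.
set q := \prod_(b <- B) ('X - b%:P).
have szq : size q = m by rewrite size_prod_XsubC szB prednK.
set g := ('X + 1%:P) * q * q.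
set G := Tp R d g.
have szg : (size g <= 2 * m)%N.
  have h1 := size_polyMleq (('X + 1%:P) * q) q.
  have h2 := size_polyMleq ('X + 1%:P) q.
  rewrite size_XaddC szq in h2; rewrite szq in h1.
  rewrite /g; lia.
have szd : (size g^`() <= (size g).-1)%N.
  have [->|nz] := eqVneq g 0; first by rewrite deriv0 size_poly0.
  have := lt_size_deriv nz; lia.
have szG : (size G <= (2 * m).+1)%N.
  rewrite /G /Tp; apply: leq_trans (size_polyD _ _) _; rewrite size_polyN geq_max; apply/andP; split.
    apply: leq_trans (size_polyMleq _ _) _.
    have h3 : (size ((1 - 'X^2)%R : {poly R}) <= 3)%N.
      apply: leq_trans (size_polyD _ _) _; rewrite size_polyN size_polyXn size_poly1; lia.
    rewrite -subn1; rewrite -subn1 in szd. move: h3 szd szg hm. move: (size _) (size g^`()) (size g) => a b c. lia.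
  apply: leq_trans (size_scale_leq _ _) _.
  apply: leq_trans (size_polyMleq _ _) _.
  rewrite size_polyX -subn1; lia.
have hdes' := hdes (PP R d (x i) G) (leq_trans (PP_msize _ _ _ _) szG).
have hL : sphere_int R d (PP R d (x i) G) = 0 := stein R d (x i) (sph i) g.
rewrite hL in hdes'.
rewrite (eq_bigr (fun k => G.[dotp R d.+1 (x i) (x k)])) in hdes'; last first.
  by move=> k _; rewrite PP_eval.
have qroot : forall a, a \in B -> q.[a] = 0.
  by move=> a ha; apply/rootP; rewrite root_prod_XsubC.
have Geval : forall a, G.[a] = (1 - a ^+ 2) * (g^`()).[a] - d%:R * (a * g.[a]).
  by move=> a; rewrite /G /Tp !hornerE.
have Gval : forall a, a \in A -> G.[a] = 0.
  move=> a ha; rewrite Geval.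
  have [->|na] := eqVneq a (-1).
    rewrite (_ : 1 - (-1) ^+ 2 = 0 :> R); last by rewrite sqrrN expr1n subrr.
    by rewrite mul0r add0r /g !hornerM hornerD hornerX hornerC addNr !(mulr0, mul0r) oppr0.
  have hq : q.[a] = 0 by apply: qroot; rewrite mem_filter na.
  by rewrite /g derivM hornerD !hornerM hq !(mulr0, mul0r, addr0) subrr.
rewrite (bigD1 i) //= big1 ?addr0 in hdes'; last first.
  by move=> k hk; apply: Gval; apply: memA; rewrite eq_sym.
rewrite hii Geval (_ : 1 - 1 ^+ 2 = 0 :> R) ?expr1n ?subrr // mul0r add0r mul1r in hdes'.
have hN : (N%:R : R)^-1 != 0.
  by rewrite invr_eq0 pnatr_eq0 -lt0n (leq_ltn_trans (leq0n i) (ltn_ord i)).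
have h2 : (1 + 1 : R) != 0 by apply: lt0r_neq0; lra.
have hd' : (d%:R : R) != 0 by rewrite pnatr_eq0 -lt0n.
have q1 : q.[1] = 0.
  move/eqP: hdes'; rewrite mulf_eq0 (negbTE hN) /= oppr_eq0 mulf_eq0 (negbTE hd') /=.
  rewrite /g !hornerM hornerD hornerX hornerC !mulf_eq0 (negbTE h2) orbb /=.
  by move/eqP.
have : root q 1 by apply/rootP.
rewrite root_prod_XsubC mem_filter => /andP [_].
rewrite /A /inner_products mem_undup => /mapP [[k l]].
rewrite mem_enum inE /= => hkl h1.
have := unit_eq (sph k) (sph l) (esym h1) => /inj ekl.
by rewrite ekl eqxx in hkl.
Qed.
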